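(* Let $X$ be a random variable with mean zero, finite variance $\sigma^2>0$ and density $f_X=e^{-\varphi}$ with $\varphi$ differentiable, and suppose there are $x_l<0<x_r$ such that 1. $\varphi'(x)\le x/\sigma^2$ for $x\le x_l$, 2. $\varphi'(x)\ge x/\sigma^2$ for $x\ge x_r$. Let $X^*$ have the zero bias distribution of $X$, with density $f_{X^*}$. Then $f_{X^*}(x)\le f_X(x)$ for all $x\in(-\infty,x_l)\cup(x_r,\infty)$. If in addition $\mathbb{E}X^3=0$ and $f_X(x)\le f_{X^*}(x)$ for every $x\in(x_l,x_r)$, then $X^*$ is smaller than $X$ in the convex order.
   Context: Zero bias transform: for $X$ with mean zero and finite variance $\sigma^2$, $X^*$ has the zero bias distribution of $X$ if $\mathbb{E}[Xf(X)]=\sigma^2\mathbb{E}[f'(X^* )]$ for all absolutely continuous $f$ for which the expectations exist; $X^*$ is absolutely continuous with density $f_{X^*}(t)=\sigma^{-2}\mathbb{E}[X\mathbb{I}_{X>t}]=-\sigma^{-2}\mathbb{E}[X\mathbb{I}_{X\le t}]$. Convex order: $U$ is smaller than $V$ in the convex order if $\mathbb{E}g(U)\le\mathbb{E}g(V)$ for every convex $g$ with both expectations finite. *)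

(* Defs.v *)
From HB Require Import structures.
From mathcomp Require Import all_boot all_order all_algebra.
From mathcomp Require Import all_classical all_reals all_analysis.
Set Implicit Arguments. Unset Strict Implicit. Unset Printing Implicit Defensive.
Import Order.TTheory GRing.Theory Num.Theory.
Local Open Scope classical_set_scope.
Local Open Scope ring_scope.

Definition zero_bias_density {R : realType} (f : R -> R) (s2 : R) (t : R) : R :=
  s2^-1 * fine (\int[@lebesgue_measure R]_(x in `]t, +oo[) (x * f x)%:E)%E.

Definition convex_order_le {R : realType} (fU fV : R -> R) : Prop :=
  forall g : R -> R,
    convex_function [set: R] g ->
    (@lebesgue_measure R).-integrable [set: R] (fun x => (g x * fU x)%:E) ->
    (@lebesgue_measure R).-integrable [set: R] (fun x => (g x * fV x)%:E) ->
    (\int[@lebesgue_measure R]_x (g x * fU x)%:E <=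
     \int[@lebesgue_measure R]_x (g x * fV x)%:E)%E.

(* Main.v *)
Require Import Defs.
From HB Require Import structures.
From mathcomp Require Import all_boot all_order all_algebra.
From mathcomp Require Import all_classical all_reals all_analysis.
From mathcomp Require Import measurable_realfun.
From mathcomp Require Import ring lra.
Set Implicit Arguments. Unset Strict Implicit. Unset Printing Implicit Defensive.
Import Order.TTheory GRing.Theory Num.Theory.
Import numFieldNormedType.Exports.
Local Open Scope classical_set_scope.
Local Open Scope ring_scope.

Section Gauss.
Variable R : realType.
Variable s2 : R.
Hypothesis s2gt0 : 0 < s2.
Local Notation mu := (@lebesgue_measure R).
Definition gq (y : R) := y ^+ 2 / (2 * s2).

Lemma gq_derive (x : R) : is_derive x 1 gq (x / s2).
Proof.
rewrite /gq; apply: is_derive_eq.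
rewrite scaler0 add0r /GRing.scale /= mulr1 -mulr2n -mulr_natr.
field; exact: lt0r_neq0.
Qed.

Lemma gq_cvgy : gq y @[y --> +oo] --> +oo.
Proof.
rewrite /gq; apply: gt0_cvgMly; last exact: cvgr_expr2.
by rewrite invr_gt0 mulr_gt0.
Qed.

Let Fg (y : R) := - s2 * expR (- gq y).
Let fg (y : R) := y * expR (- gq y).

Lemma Fg_derive (x : R) : is_derive x 1 Fg (fg x).
Proof.
have := gq_derive x => dg.
rewrite /Fg /fg; apply: is_derive_eq.
rewrite /GRing.scale /=; field; exact: lt0r_neq0.
Qed.


Lemma fg_cont : continuous fg.
Proof.
move=> x; apply: differentiable_continuous; apply/derivable1_diffP.
rewrite /fg; have := gq_derive x => dg.
apply: derivableM; first exact: derivable_id.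
exact: ex_derive.
Qed.

Lemma Fg_cont : continuous Fg.
Proof.
move=> x; apply: differentiable_continuous; apply/derivable1_diffP.
have := Fg_derive x => h; exact: ex_derive.
Qed.

Lemma Fg_cvgy : Fg y @[y --> +oo] --> 0.
Proof.
rewrite /Fg -(mulr0 (- s2)); apply: cvgMl_tmp.
have := @cvgr_expR R.
move=> h; apply: (cvg_comp gq (fun z => expR (- z)) gq_cvgy h).
Qed.

Lemma gauss_tail (a : R) : 0 <= a ->
  (\int[mu]_(y in `[a, +oo[) (y * expR (- gq y))%:E = (s2 * expR (- gq a))%:E)%E.
Proof.
move=> a0.
rewrite (@ge0_continuous_FTC2y R fg Fg a 0).
- by rewrite sub0e /Fg -EFinN mulNr opprK.
- by move=> x ax; rewrite /fg mulr_ge0 ?expR_ge0 // (le_trans a0).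
- exact/continuous_subspaceT/fg_cont.
- exact: Fg_cvgy.
- by move=> x _; have := Fg_derive x => h; exact: ex_derive.
- exact/cvg_at_right_filter/Fg_cont.
- by move=> x _; rewrite derive1E; have := Fg_derive x => h; exact: derive_val.
Qed.


Lemma tail_bound (h : R -> R) (a C : R) : 0 <= a -> 0 <= C ->
  measurable_fun `[a, +oo[ h ->
  (forall y, a <= y -> 0 <= h y <= C * (y * expR (- gq y))) ->
  (\int[mu]_(y in `[a, +oo[) (h y)%:E <= (C * (s2 * expR (- gq a)))%:E)%E.
Proof.
move=> a0 C0 mh hb.
apply: (@le_trans _ _ (\int[mu]_(y in `[a, +oo[) (C * (y * expR (- gq y)))%:E)%E).
  apply: ge0_le_integral => //.
  - by move=> y; rewrite /= in_itv /= andbT => ay; rewrite lee_fin; case/andP: (hb y ay).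
  - exact/measurable_EFinP.
  - apply/measurable_EFinP; apply: measurable_funM => //.
    apply: measurable_funS (continuous_measurable_fun fg_cont) => //.
  - by move=> y; rewrite /= in_itv /= andbT => ay; rewrite lee_fin; case/andP: (hb y ay).
under eq_integral do rewrite EFinM.
rewrite ge0_integralZl_EFin //.
- by rewrite gauss_tail // -EFinM.
- move=> y; rewrite /= in_itv /= andbT => ay; rewrite lee_fin mulr_ge0 ?expR_ge0 //.
  exact: le_trans ay.
- apply/measurable_EFinP.
  apply: measurable_funS (continuous_measurable_fun fg_cont) => //.
Qed.

End Gauss.

Section Part1.
Variable R : realType.
Variable phi : R -> R.
Variables s2 xl xr : R.
Hypothesis dphi : forall x, derivable phi x 1.
Hypothesis s2gt0 : 0 < s2.
Hypothesis Hint1 : (@lebesgue_measure R).-integrable [set: R] (fun x => (x * expR (- phi x))%:E).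
Hypothesis Hmean : (\int[@lebesgue_measure R]_x (x * expR (- phi x))%:E = 0)%E.
Hypothesis xl0 : xl < 0.
Hypothesis xr0 : 0 < xr.
Hypothesis Hl : forall x, x <= xl -> derive1 phi x <= x / s2.
Hypothesis Hr : forall x, xr <= x -> x / s2 <= derive1 phi x.
Local Notation mu := (@lebesgue_measure R).
Let f x := expR (- phi x).

Lemma cphi : continuous phi.
Proof. by move=> x; apply: differentiable_continuous; apply/derivable1_diffP. Qed.

Lemma cf : continuous f.
Proof.
move=> x; rewrite /f; apply: continuous_comp; last exact: continuous_expR.
by apply: continuousN; exact: cphi.
Qed.

Lemma mf : measurable_fun setT f.
Proof. exact: continuous_measurable_fun cf. Qed.

Let psi x := phi x - gq s2 x.

Lemma psi_derive (x : R) : is_derive x 1 psi (derive1 phi x - x / s2).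
Proof.
have dp : is_derive x 1 phi (derive1 phi x) by rewrite derive1E; apply/derivableP.
have := gq_derive s2gt0 x => dg.
rewrite /psi; exact: is_deriveB.
Qed.

Lemma psi_cont : continuous psi.
Proof.
move=> x; apply: differentiable_continuous; apply/derivable1_diffP.
have := psi_derive x => h; exact: ex_derive.
Qed.

Lemma psi_left x y : y <= x -> x <= xl -> psi x <= psi y.
Proof.
move=> yx xxl; apply: (@ler0_derive1_nincrNy R psi xl) => //.
- by move=> z _; have := psi_derive z => h; exact: ex_derive.
- move=> z; rewrite in_itv /= => zl.
  rewrite derive1E; have := psi_derive z => h; rewrite derive_val subr_le0.
  exact/Hl/ltW.
- exact/continuous_subspaceT/psi_cont.
Qed.

Lemma psi_right x y : xr <= x -> x <= y -> psi x <= psi y.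
Proof.
move=> xrx xy; apply: (@ger0_derive1_ndecry R psi xr) => //.
- by move=> z _; have := psi_derive z => h; exact: ex_derive.
- move=> z; rewrite in_itv /= andbT => zr.
  rewrite derive1E; have := psi_derive z => h; rewrite derive_val subr_ge0.
  exact/Hr/ltW.
- exact/continuous_subspaceT/psi_cont.
Qed.

Lemma f_bound x y : psi x <= psi y ->
  f y <= f x * expR (gq s2 x) * expR (- gq s2 y).
Proof.
rewrite /psi /f -!expRD ler_expR => h; lra.
Qed.


Let I t := (\int[mu]_(y in `]t, +oo[) (y * f y)%:E)%E.

Lemma int_sub (D : set R) : measurable D -> mu.-integrable D (fun y => (y * f y)%:E).
Proof. by move=> mD; apply: integrableS Hint1. Qed.

Lemma I_fin t : I t \is a fin_num.
Proof. exact/integrable_fin_num/int_sub. Qed.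

Lemma J_fin t : (\int[mu]_(y in `]-oo, t]) (y * f y)%:E)%E \is a fin_num.
Proof. exact/integrable_fin_num/int_sub. Qed.

Lemma I_left t : I t = (- \int[mu]_(y in `]-oo, t]) (y * f y)%:E)%E.
Proof.
have : (\int[mu]_(y in `]-oo, t] `|` `]t, +oo[) (y * f y)%:E = 0)%E.
  by rewrite itv_setU_setT.
rewrite integral_setU //; last 2 first.
- rewrite itv_setU_setT; exact: measurable_int Hint1.
- apply/disj_setPS => y [] /=; rewrite !in_itv /= => a b; lra.
rewrite -/(I t) -(fineK (J_fin t)) -(fineK (I_fin t)) -EFinD => /eqP.
rewrite eqe => /eqP h; rewrite -EFinN; congr EFin; lra.
Qed.

Lemma resc (a b c : R) : a * b = b * expR c * (a * expR (- c)).
Proof.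
have h := expRxMexpNx_1 c.
by transitivity (a * b * (expR c * expR (- c))); [rewrite h mulr1 | ring].
Qed.

Lemma zb_right x : xr < x -> zero_bias_density f s2 x <= f x.
Proof.
move=> xrx; have x0 : 0 < x := lt_trans xr0 xrx.
have HI : (I x <= (s2 * f x)%:E)%E.
  rewrite /I integral_itv_obnd_cbnd; last first.
    by apply: (measurable_funS measurableT) => //; exact: measurable_int Hint1.
  have -> : s2 * f x = f x * expR (gq s2 x) * (s2 * expR (- gq s2 x)).
    exact: resc.
  apply: tail_bound => //.
  - exact: ltW.
  - by rewrite mulr_ge0 ?expR_ge0.
  - apply: (measurable_funS measurableT) => //; apply: measurable_funM => //; exact: mf.
  - move=> y xy; rewrite mulr_ge0 ?expR_ge0 ?(le_trans (ltW x0)) //=.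
    rewrite [X in _ <= X]mulrCA; apply: ler_wpM2l; first exact: (le_trans (ltW x0)).
    exact/f_bound/psi_right/xy/ltW.
rewrite /zero_bias_density -/(I x) ler_pdivrMl //.
by rewrite -lee_fin fineK ?I_fin.
Qed.

Lemma cG : continuous (fun y : R => - (y * f y)).
Proof.
move=> y.
have h : {for y, continuous (fun y : R => y * f y)}.
  apply: continuousM; [exact: cvg_id | exact: cf].
exact: (continuousN h).
Qed.

Lemma zb_left x : x < xl -> zero_bias_density f s2 x <= f x.
Proof.
move=> xxl; have x0 : x < 0 := lt_trans xxl xl0.
have HI : (I x <= (s2 * f x)%:E)%E.
  rewrite I_left -mulN1e -integralZl; last 2 first.
  - by [].
  - exact: int_sub.
  under eq_integral do rewrite -EFinM mulN1r.
  rewrite -[x]opprK ge0_integration_by_substitutionNy; last 2 first.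
  - by apply/continuous_subspaceT => y; exact: cG.
  - move=> y; rewrite in_itv /= oppr_ge0 => yx.
    rewrite nmulr_rle0 ?expR_ge0 //; lra.
  rewrite opprK.
  have -> : s2 * f x = f x * expR (gq s2 x) * (s2 * expR (- gq s2 (- x))).
    have -> : gq s2 (- x) = gq s2 x by rewrite /gq sqrrN.
    exact: resc.
  apply: tail_bound => //.
  - by rewrite oppr_ge0 ltW.
  - by rewrite mulr_ge0 ?expR_ge0.
  - apply: (measurable_funS measurableT) => //; apply: continuous_measurable_fun.
    move=> y; apply: continuous_comp; last exact: cG.
    exact: (continuousN (@cvg_id _ (nbhs y))).
  - move=> y xy /=; rewrite mulNr opprK.
    have y0 : 0 <= y by rewrite (le_trans _ xy) // oppr_ge0 ltW.
    rewrite mulr_ge0 ?expR_ge0 //=.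
    rewrite [X in _ <= X]mulrCA; apply: ler_wpM2l => //.
    have -> : gq s2 y = gq s2 (- y) by rewrite /gq sqrrN.
    apply/f_bound/psi_left; last exact: ltW.
    by rewrite lerNl.
rewrite /zero_bias_density -/(I x) ler_pdivrMl //.
by rewrite -lee_fin fineK ?I_fin.
Qed.

End Part1.



Section Lin.
Variable R : realType.
Local Notation mu := (@lebesgue_measure R).

Lemma gq1_cont : continuous (gq (1 : R)).
Proof.
move=> x; apply: differentiable_continuous; apply/derivable1_diffP.
have := gq_derive (@ltr01 R) x => H; exact: ex_derive.
Qed.

Lemma int_id (a b : R) : a < b ->
  (\int[mu]_(t in `[a, b[) (t)%:E = (gq 1 b - gq 1 a)%:E)%E.
Proof.
move=> ab.
rewrite integral_itv_bndo_bndc; last first.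
  by apply/measurable_EFinP; exact: measurable_id.
rewrite (@continuous_FTC2 R id (gq 1) a b ab) //.
- by apply/continuous_subspaceT => x; exact: cvg_id.
- split.
  + by move=> x _; have := gq_derive (@ltr01 R) x => H; exact: ex_derive.
  + exact/cvg_at_right_filter/gq1_cont.
  + exact/cvg_at_left_filter/gq1_cont.
- move=> x _; rewrite derive1E; have := gq_derive (@ltr01 R) x => H.
  by rewrite derive_val divr1.
Qed.

Lemma int_id_integrable (a b : R) : mu.-integrable `[a, b[ (fun t => (t)%:E).
Proof.
have H : mu.-integrable `[a, b] (EFin \o id).
  apply: (@continuous_compact_integrable R id); first exact: segment_compact.
  by apply/continuous_subspaceT => x; exact: cvg_id.
apply: (integrableS _ _ _ H) => //.
by apply: subset_itv; rewrite bnd_simp.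
Qed.

Lemma int_lin (a b c : R) : a < b ->
  (\int[mu]_(t in `[a, b[) (c * t)%:E = (c * (gq 1 b - gq 1 a))%:E)%E.
Proof.
move=> ab; under eq_integral do rewrite EFinM.
by rewrite integralZl //; [rewrite int_id // -EFinM | exact: int_id_integrable].
Qed.

End Lin.

Section Part2.
Variable R : realType.
Variable phi : R -> R.
Variables s2 : R.
Hypothesis dphi : forall x, derivable phi x 1.
Hypothesis s2gt0 : 0 < s2.
Hypothesis Hint1 : (@lebesgue_measure R).-integrable [set: R] (fun x => (x * expR (- phi x))%:E).
Hypothesis Hmean : (\int[@lebesgue_measure R]_x (x * expR (- phi x))%:E = 0)%E.
Hypothesis Hvar : (\int[@lebesgue_measure R]_x (x ^+ 2 * expR (- phi x))%:E = s2%:E)%E.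
Hypothesis Hint3 : (@lebesgue_measure R).-integrable [set: R] (fun x => (x ^+ 3 * expR (- phi x))%:E).
Hypothesis Hm3 : (\int[@lebesgue_measure R]_x (x ^+ 3 * expR (- phi x))%:E = 0)%E.
Local Notation mu := (@lebesgue_measure R).
Let f x := expR (- phi x).

Let Ap : set (R * R) := [set p | 0 <= p.1 /\ p.1 < p.2].
Let An : set (R * R) := [set p | p.2 <= p.1 /\ p.1 < 0].
Let h (y : R) := y * f y.

Definition kk (p : R * R) : R := \1_Ap p * h p.2 + \1_An p * (- h p.2).

Lemma mdiff : measurable_fun [set: R * R] (fun p : R * R => p.2 - p.1).
Proof. exact: measurable_funB measurable_snd measurable_fst. Qed.

Lemma mAp : measurable Ap.
Proof.
have -> : Ap = (fst @^-1` `[0, +oo[) `&` ((fun p : R * R => p.2 - p.1) @^-1` `]0, +oo[).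
  apply/seteqP; split => [[t y]|[t y]]; rewrite /Ap /= ?in_itv /= ?andbT.
    by move=> [t0 ty]; split => //; rewrite subr_gt0.
  by move=> [t0]; rewrite subr_gt0.
apply: measurableI.
  by have := @measurable_fst _ _ R R measurableT _ (measurable_itv `[0, +oo[); rewrite setTI.
by have := mdiff measurableT (measurable_itv `]0, +oo[); rewrite setTI.
Qed.

Lemma mAn : measurable An.
Proof.
have -> : An = (fst @^-1` `]-oo, 0[) `&` ((fun p : R * R => p.2 - p.1) @^-1` `]-oo, 0]).
  apply/seteqP; split => [[t y]|[t y]]; rewrite /An /= ?in_itv /=.
    by move=> [ty t0]; split => //; rewrite subr_le0.
  by move=> [t0]; rewrite subr_le0.
apply: measurableI.
  by have := @measurable_fst _ _ R R measurableT _ (measurable_itv `]-oo, 0[); rewrite setTI.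
by have := mdiff measurableT (measurable_itv `]-oo, 0]); rewrite setTI.
Qed.

Lemma mh : measurable_fun setT h.
Proof. apply: measurable_funM; [exact: measurable_id | exact: (mf dphi)]. Qed.

Lemma mkk : measurable_fun [set: R * R] kk.
Proof.
apply: measurable_funD; apply: measurable_funM.
- exact: measurable_indic mAp.
- exact: (@measurableT_comp _ _ _ _ _ _ h _ snd mh measurable_snd).
- exact: measurable_indic mAn.
- exact: (@measurableT_comp _ _ _ _ _ _ (fun y => - h y) _ snd (measurable_funN mh) measurable_snd).
Qed.

Lemma inset (T : Type) (A : set T) x : A x -> (x \in A) = true.
Proof. by move=> H; rewrite mem_set. Qed.
Lemma ninset (T : Type) (A : set T) x : ~ A x -> (x \in A) = false.
Proof. by move=> H; apply/negbTE; apply/negP => /set_mem. Qed.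

Lemma kk_t_pos t y : 0 <= t -> kk (t, y) = \1_`]t, +oo[ y * h y.
Proof.
move=> t0; rewrite /kk !indicE.
rewrite (@ninset _ An); last by rewrite /An /=; lra.
have [ty|ty] := ltP t y.
  rewrite (@inset _ Ap) /Ap //= (@inset _ `]t, +oo[) /= ?in_itv /= ?ty //.
  by rewrite mul0r addr0.
rewrite (@ninset _ Ap) /Ap /=; last lra.
rewrite (@ninset _ `]t, +oo[) /= ?in_itv /= ?andbT ?ltNge ?ty //=.
by rewrite mul0r add0r mul0r.
Qed.

Lemma kk_t_neg t y : t < 0 -> kk (t, y) = \1_`]-oo, t] y * (- h y).
Proof.
move=> t0; rewrite /kk !indicE.
rewrite (@ninset _ Ap); last by rewrite /Ap /=; lra.
have [ty|ty] := leP y t.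
  rewrite (@inset _ An) /An //= (@inset _ `]-oo, t]) /= ?in_itv /= ?ty //.
  by rewrite mul0r add0r.
rewrite (@ninset _ An) /An /=; last lra.
rewrite (@ninset _ `]-oo, t]) /= ?in_itv /= ?leNgt ?ty //=.
by rewrite mul0r add0r mul0r.
Qed.

Lemma kk_y_pos t y : 0 < y -> kk (t, y) = \1_`[0, y[ t * h y.
Proof.
move=> y0; rewrite /kk !indicE.
rewrite (@ninset _ An); last by rewrite /An /=; lra.
have [ty|ty] := boolP ((0 <= t) && (t < y)).
  rewrite (@inset _ Ap) /Ap /=; last by move/andP: ty; lra.
  rewrite (@inset _ `[0, y[) /= ?in_itv /= ?ty //.
  by rewrite mul0r addr0.
rewrite (@ninset _ Ap) /Ap /=; last by move=> [] ? ?; move/negP: ty; apply; apply/andP.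
rewrite (@ninset _ `[0, y[) /= ?in_itv /=; last by move/negP: ty.
by rewrite mul0r add0r mul0r.
Qed.

Lemma kk_y_neg t y : y < 0 -> kk (t, y) = \1_`[y, 0[ t * (- h y).
Proof.
move=> y0; rewrite /kk !indicE.
rewrite (@ninset _ Ap); last by rewrite /Ap /=; lra.
have [ty|ty] := boolP ((y <= t) && (t < 0)).
  rewrite (@inset _ An) /An /=; last by move/andP: ty; lra.
  rewrite (@inset _ `[y, 0[) /= ?in_itv /= ?ty //.
  by rewrite mul0r add0r.
rewrite (@ninset _ An) /An /=; last by move=> [] ? ?; move/negP: ty; apply; apply/andP.
rewrite (@ninset _ `[y, 0[) /= ?in_itv /=; last by move/negP: ty.
by rewrite mul0r add0r mul0r.
Qed.

Lemma kk_y0 t : kk (t, 0) = 0.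
Proof.
rewrite /kk !indicE (@ninset _ Ap) /Ap /=; last lra.
by rewrite (@ninset _ An) /An /=; [rewrite !mul0r addr0 | lra].
Qed.

Lemma indic_mul_ge0 (A : set R) (u : R -> R) x :
  (A x -> 0 <= u x) -> 0 <= \1_A x * u x.
Proof.
move=> H; rewrite indicE; case: (boolP (x \in A)) => [/set_mem Ax|_].
  by rewrite mul1r; exact: H.
by rewrite mul0r.
Qed.

Lemma f_gt0' y : 0 < f y.
Proof. exact: expR_gt0. Qed.

Lemma kk_ge0 p : 0 <= kk p.
Proof.
case: p => t y; have fy := f_gt0' y.
have [t0|t0] := leP 0 t.
  rewrite kk_t_pos //; apply: (@indic_mul_ge0 _ h); rewrite /= in_itv /= andbT => ty.
  by rewrite /h mulr_ge0 //; [lra|exact: ltW].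
rewrite kk_t_neg //; apply: (@indic_mul_ge0 _ (fun y => - h y)); rewrite /= in_itv /= => ty.
by rewrite /h -mulNr mulr_ge0 //; [lra|exact: ltW].
Qed.

Lemma int_indic (A : set R) (u : R -> R) :
  (\int[mu]_x (\1_A x * u x)%:E = \int[mu]_(x in A) (u x)%:E)%E.
Proof.
rewrite [RHS]integral_mkcond; apply: eq_integral => x _.
rewrite /patch indicE; case: (x \in A); by rewrite ?mul1r ?mul0r.
Qed.

Let I t := (\int[mu]_(y in `]t, +oo[) (h y)%:E)%E.

Lemma negint (D : set R) : measurable D -> (\int[mu]_(y in D) (- h y)%:E = - \int[mu]_(y in D) (h y)%:E)%E.
Proof.
move=> mD; under eq_integral do rewrite -mulN1r EFinM.
rewrite integralZl //; first by rewrite mulN1e.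
exact: int_sub.
Qed.

Lemma inner_y t : (\int[mu]_y (kk (t, y))%:E = I t)%E.
Proof.
have [t0|t0] := leP 0 t.
  under eq_integral do rewrite kk_t_pos //.
  by rewrite int_indic.
under eq_integral do rewrite kk_t_neg //.
rewrite int_indic negint //.
by rewrite /I /h (I_left Hint1 Hmean).
Qed.

Lemma inner_t y : (\int[mu]_t (kk (t, y))%:E = (y ^+ 2 * f y)%:E)%E.
Proof.
have [y0|y0|<-] := ltgtP 0 y.
- under eq_integral do rewrite kk_y_pos //.
  rewrite int_indic integral_cst //.
  set m := (X in (_ * X)%E).
  have -> : m = y%:E.
    have := lebesgue_measure_itv `[0, y[; rewrite /= lte_fin y0 sube0 => H; exact: H.
  by rewrite -EFinM /h; congr EFin; ring.
- under eq_integral do rewrite kk_y_neg //.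
  rewrite int_indic integral_cst //.
  set m := (X in (_ * X)%E).
  have -> : m = (- y)%:E.
    have := lebesgue_measure_itv `[y, 0[; rewrite /= lte_fin y0 add0e => H; exact: H.
  by rewrite -EFinM /h; congr EFin; ring.
- under eq_integral do rewrite kk_y0.
  by rewrite integral0 expr0n /= mul0r.
Qed.

Let zb := zero_bias_density f s2.

Lemma mkkE : measurable_fun [set: R * R] (fun p => (kk p)%:E).
Proof. by apply/measurable_EFinP; exact: mkk. Qed.

Lemma I_ge0 t : (0 <= I t)%E.
Proof.
rewrite -inner_y; apply: integral_ge0 => y _; rewrite lee_fin; exact: kk_ge0.
Qed.

Lemma IE t : I t = (s2 * zb t)%:E.
Proof.
rewrite /zb /zero_bias_density mulrA divff ?mul1r; last exact: lt0r_neq0.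
by rewrite fineK //; exact: (I_fin Hint1).
Qed.

Lemma zb_ge0 t : 0 <= zb t.
Proof.
have := I_ge0 t; rewrite IE lee_fin => H.
by rewrite -(pmulr_rge0 _ s2gt0).
Qed.

Lemma tonelli_k : (\int[mu]_t I t = s2%:E)%E.
Proof.
rewrite -Hvar.
transitivity (\int[mu]_t \int[mu]_y (kk (t, y))%:E)%E.
  by apply: eq_integral => t _; rewrite inner_y.
transitivity (\int[mu]_y \int[mu]_t (kk (t, y))%:E)%E.
  apply: (@fubini_tonelli _ _ _ _ R mu mu (fun p => (kk p)%:E) mkkE).
  by move=> p; rewrite lee_fin kk_ge0.
by apply: eq_integral => y _; rewrite inner_t.
Qed.

Lemma mI : measurable_fun setT I.
Proof.
have := measurable_fun_fubini_tonelli_F (m2 := mu) (fun p => (kk p)%:E) mkkE.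
rewrite /fubini_F => H.
have -> : I = (fun t => \int[mu]_y (kk (t, y))%:E)%E by apply/funext => t; rewrite inner_y.
apply: H => p; rewrite lee_fin; exact: kk_ge0.
Qed.

Lemma mzb : measurable_fun setT zb.
Proof.
have H : measurable_fun setT (fun t => s2 * zb t).
  apply/measurable_EFinP.
  have -> : (EFin \o (fun t => s2 * zb t)) = I by apply/funext => t; rewrite /= IE.
  exact: mI.
have -> : zb = (fun t => s2^-1 * (s2 * zb t)).
  by apply/funext => t; rewrite mulrA mulVf ?mul1r //; exact: lt0r_neq0.
exact: measurable_funM.
Qed.

Lemma zb_int1 : (\int[mu]_t (zb t)%:E = 1)%E.
Proof.
have := tonelli_k.
under eq_integral do rewrite IE EFinM.
rewrite ge0_integralZl_EFin //; last 3 first.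
- by move=> t _; rewrite lee_fin zb_ge0.
- by apply/measurable_EFinP; exact: mzb.
- exact: ltW.
have : (0 <= \int[mu]_t (zb t)%:E)%E by apply: integral_ge0 => t _; rewrite lee_fin zb_ge0.
case: (\int[mu]_t (zb t)%:E)%E => [r _||] //.
- rewrite -EFinM => /eqP; rewrite eqe => /eqP H; congr EFin.
  by apply: (mulfI (lt0r_neq0 s2gt0)); rewrite H mulr1.
- by rewrite gt0_muley ?lte_fin.
Qed.

Lemma inner_my t : (\int[mu]_y (t * kk (t, y))%:E = (t * (s2 * zb t))%:E)%E.
Proof.
have [t0|t0] := leP 0 t.
  under eq_integral do rewrite kk_t_pos // mulrCA.
  rewrite int_indic; under eq_integral do rewrite EFinM.
  rewrite integralZl //; last exact: int_sub.
  by rewrite -/(I t) IE -EFinM.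
under eq_integral do rewrite kk_t_neg // mulrCA mulrN -mulNr.
rewrite int_indic; under eq_integral do rewrite EFinM.
rewrite integralZl //; last exact: int_sub.
have := I_left Hint1 Hmean t; rewrite -/(I t) IE /h => H.
by rewrite EFinM H EFinN muleN mulNe.
Qed.

Lemma gq10 : gq (1 : R) 0 = 0.
Proof. by rewrite /gq expr0n /= mul0r. Qed.

Lemma inner_mt y : (\int[mu]_t (t * kk (t, y))%:E = (y ^+ 3 * f y / 2)%:E)%E.
Proof.
have [y0|y0|<-] := ltgtP 0 y.
- under eq_integral => t _ do rewrite kk_y_pos // mulrCA (mulrC t).
  rewrite int_indic int_lin // gq10 /gq /h; by congr EFin; field.
- under eq_integral => t _ do rewrite kk_y_neg // mulrCA (mulrC t).
  rewrite int_indic int_lin // gq10 /gq /h; by congr EFin; field.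
- under eq_integral do rewrite kk_y0 mulr0.
  by rewrite integral0 expr0n /= !mul0r.
Qed.

Lemma inner_amt y : (\int[mu]_t `|(t * kk (t, y))%:E| = (`|y| ^+ 3 * f y / 2)%:E)%E.
Proof.
under eq_integral do rewrite abse_EFin normrM (ger0_norm (kk_ge0 _)).
have [y0|y0|<-] := ltgtP 0 y.
- under eq_integral => t _ do rewrite kk_y_pos // mulrCA (mulrC `|t|).
  rewrite int_indic.
  transitivity (\int[mu]_(t in `[0%R, y[) (h y * t)%:E)%E.
    apply: eq_integral => t; rewrite inE /= in_itv /= => /andP[t0 _].
    by rewrite ger0_norm.
  rewrite int_lin // gq10 /gq /h (gtr0_norm y0); by congr EFin; field.
- under eq_integral => t _ do rewrite kk_y_neg // mulrCA (mulrC `|t|).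
  rewrite int_indic.
  transitivity (\int[mu]_(t in `[y, 0%R[) (h y * t)%:E)%E.
    apply: eq_integral => t; rewrite inE /= in_itv /= => /andP[_ t0].
    by rewrite ltr0_norm // mulrNN.
  rewrite int_lin // gq10 /gq /h (ltr0_norm y0); by congr EFin; field.
- under eq_integral do rewrite kk_y0 mulr0.
  by rewrite integral0 normr0 expr0n /= !mul0r.
Qed.

Lemma mm : measurable_fun [set: R * R] (fun p : R * R => (p.1 * kk p)%:E).
Proof. by apply/measurable_EFinP; apply: measurable_funM; [exact: measurable_fst | exact: mkk]. Qed.

Lemma m_int : (mu \x mu)%E.-integrable [set: R * R] (fun p : R * R => (p.1 * kk p)%:E).
Proof.
apply/(integrable21ltyP mu mu mm).
under eq_integral do rewrite inner_amt.
have /integrableP[_ H3] := Hint3.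
apply: le_lt_trans H3.
apply: ge0_le_integral => //.
- by move=> y _; rewrite lee_fin divr_ge0 // mulr_ge0 // ?exprn_ge0 // ?normr_ge0 //; exact: ltW (f_gt0' y).
- apply/measurable_EFinP; apply: measurable_funM => //.
  apply: measurable_funM => //; last exact: (mf dphi).
  apply: measurable_funX; exact: normr_measurable.
- apply: measurableT_comp => //; apply/measurable_EFinP.
  by apply: measurable_funM; [apply: measurable_funX| exact: (mf dphi)].
- move=> y _; rewrite abse_EFin lee_fin normrM normrX (gtr0_norm (f_gt0' y)).
  rewrite ler_pdivrMr // ler_peMr //; last by rewrite ler1n.
  by rewrite mulr_ge0 // ?exprn_ge0 // ?normr_ge0 //; exact: ltW (f_gt0' y).
Qed.

Lemma fub : (\int[mu]_t (t * (s2 * zb t))%:E = 0)%E.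
Proof.
transitivity (\int[mu]_t \int[mu]_y (t * kk (t, y))%:E)%E.
  by apply: eq_integral => t _; rewrite inner_my.
transitivity (\int[mu]_y \int[mu]_t (t * kk (t, y))%:E)%E.
  exact: (@Fubini _ _ _ _ R mu mu (fun p : R * R => (p.1 * kk p)%:E) m_int).
under eq_integral do rewrite inner_mt mulrC EFinM.
rewrite integralZl //; set J := (\int[_]_x _)%E; have -> : J = 0%E by exact: Hm3.
by rewrite mule0.
Qed.

Lemma tzb_int : mu.-integrable [set: R] (fun t => (t * zb t)%:E).
Proof.
have H := integrable_fubini_F m_int.
have H2 : mu.-integrable [set: R] (fun t => (t * (s2 * zb t))%:E).
  apply: eq_integrable H => // t _; rewrite /fubini_F /=; exact: inner_my.
have := integrableZl measurableT (s2^-1) H2.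
apply: eq_integrable => // t _.
rewrite -EFinM; congr EFin; field; exact: lt0r_neq0.
Qed.

Lemma tzb_int0 : (\int[mu]_t (t * zb t)%:E = 0)%E.
Proof.
transitivity (\int[mu]_t ((s2^-1)%:E * (t * (s2 * zb t))%:E))%E.
  apply: eq_integral => t _; rewrite -EFinM; congr EFin.
  field; exact: lt0r_neq0.
rewrite integralZl //; first by rewrite fub mule0.
have H := integrable_fubini_F m_int.
apply: eq_integrable H => // t _; rewrite /fubini_F /=; exact: inner_my.
Qed.

Lemma zb_int : mu.-integrable [set: R] (fun t => (zb t)%:E).
Proof.
apply/integrableP; split; first by apply/measurable_EFinP; exact: mzb.
under eq_integral do rewrite abse_EFin ger0_norm ?zb_ge0 //.
by rewrite zb_int1 ltry.
Qed.

End Part2.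



Section Convex.
Variable R : realType.
Variable g : R -> R.
Hypothesis cg : convex_function [set: R] g.
Variables xl xr : R.
Hypothesis xlr : xl < xr.

Lemma conv_ineq (x y t : R) : 0 <= t -> t <= 1 ->
  g (t * x + (1 - t) * y) <= t * g x + (1 - t) * g y.
Proof.
move=> t0 t1.
have H := cg (Itv.mk (itv01_subdef t0 t1)).
have hx : x \in [set: R] by rewrite inE.
have hy : y \in [set: R] by rewrite inE.
have := H x y hx hy.
move=> H'; exact: H'.
Qed.

Definition ell x := g xl + (g xr - g xl) / (xr - xl) * (x - xl).

Lemma ell_mid x : xl <= x <= xr -> g x <= ell x.
Proof.
move=> /andP[h1 h2]; have xlr0 := xlr.
have d0 : xr - xl != 0 by apply: lt0r_neq0; rewrite subr_gt0.
set t := (xr - x) / (xr - xl).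
have t0 : 0 <= t by rewrite divr_ge0 //; lra.
have t1 : t <= 1 by rewrite ler_pdivrMr; lra.
have := conv_ineq xl xr t0 t1.
have -> : t * xl + (1 - t) * xr = x by rewrite /t; field.
have -> : t * g xl + (1 - t) * g xr = ell x by rewrite /t /ell; field.
by [].
Qed.

Lemma ell_left x : x < xl -> ell x <= g x.
Proof.
move=> h1; have xlr0 := xlr.
have d0 : xr - xl != 0 by apply: lt0r_neq0; rewrite subr_gt0.
have d1 : xr - x != 0 by apply: lt0r_neq0; rewrite subr_gt0; lra.
set t := (xr - xl) / (xr - x).
have tp : 0 < t by rewrite divr_gt0 //; lra.
have t1 : t <= 1 by rewrite ler_pdivrMr; lra.
have := conv_ineq x xr (ltW tp) t1.
have -> : t * x + (1 - t) * xr = xl by rewrite /t; field.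
have key : t * ell x + (1 - t) * g xr = g xl by rewrite /t /ell; field; rewrite d0 d1.
move=> H.
have : t * ell x <= t * g x by lra.
by rewrite ler_pM2l.
Qed.

Lemma ell_right x : xr < x -> ell x <= g x.
Proof.
move=> h1; have xlr0 := xlr.
have d0 : xr - xl != 0 by apply: lt0r_neq0; rewrite subr_gt0; clear cg; lra.
have d1 : x - xl != 0 by apply: lt0r_neq0; rewrite subr_gt0; clear cg; lra.
set t := (xr - xl) / (x - xl).
have tp : 0 < t by rewrite divr_gt0 //; lra.
have t1 : t <= 1 by rewrite ler_pdivrMr; lra.
have := conv_ineq x xl (ltW tp) t1.
have -> : t * x + (1 - t) * xl = xr by rewrite /t; field.
have key : t * ell x + (1 - t) * g xl = g xr by rewrite /t /ell; field; rewrite d0 d1.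
move=> H.
have : t * ell x <= t * g x by lra.
by rewrite ler_pM2l.
Qed.

Lemma ell_xl : ell xl = g xl.
Proof. by rewrite /ell subrr mulr0 addr0. Qed.

Lemma ell_xr : ell xr = g xr.
Proof.
have d0 : xr - xl != 0 by apply: lt0r_neq0; rewrite subr_gt0.
by rewrite /ell; field.
Qed.

End Convex.

Local Notation fX phi := (fun y => expR (- phi y)).
Local Notation ZB phi s2 := (zero_bias_density (fun y => expR (- phi y)) s2).
Local Notation mu := (@lebesgue_measure _).

Theorem corollary2p2 (R : realType) (phi : R -> R) (s2 xl xr : R) :
  (forall x : R, derivable phi x 1) ->
  (* f_X = exp(-phi) is a probability density *)
  (\int[@lebesgue_measure R]_x (expR (- phi x))%:E = 1)%E ->
  (* mean zero *)
  (@lebesgue_measure R).-integrable [set: R] (fun x => (x * expR (- phi x))%:E) ->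
  (\int[@lebesgue_measure R]_x (x * expR (- phi x))%:E = 0)%E ->
  (* finite variance s2 > 0 *)
  (\int[@lebesgue_measure R]_x (x ^+ 2 * expR (- phi x))%:E = s2%:E)%E ->
  0 < s2 ->
  xl < 0 -> 0 < xr ->
  (forall x, x <= xl -> derive1 phi x <= x / s2) ->
  (forall x, xr <= x -> x / s2 <= derive1 phi x) ->
  (forall x, x < xl \/ xr < x ->
     zero_bias_density (fun y => expR (- phi y)) s2 x <= expR (- phi x)) /\
  ((@lebesgue_measure R).-integrable [set: R] (fun x => (x ^+ 3 * expR (- phi x))%:E) ->
   (\int[@lebesgue_measure R]_x (x ^+ 3 * expR (- phi x))%:E = 0)%E ->
   (forall x, xl < x < xr ->
      expR (- phi x) <= zero_bias_density (fun y => expR (- phi y)) s2 x) ->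
   convex_order_le (zero_bias_density (fun y => expR (- phi y)) s2)
                   (fun y => expR (- phi y))).
Proof.
move=> dphi Hf1 Hint1 Hmean Hvar s2gt0 xl0 xr0 Hl Hr.
have zL := zb_left dphi s2gt0 Hint1 Hmean xl0 Hl.
have zR := zb_right dphi s2gt0 Hint1 xr0 Hr.
split; first by move=> x [H|H]; [exact: zL | exact: zR].
move=> Hint3 Hm3 Hmid g cg iZ iF.
have xlr : xl < xr := lt_trans xl0 xr0.
have fint : (@lebesgue_measure R).-integrable [set: R] (fun x => (fX phi x)%:E).
  apply/integrableP; split; first by apply/measurable_EFinP; exact: (mf dphi).
  under eq_integral do rewrite abse_EFin ger0_norm ?expR_ge0 //.
  by rewrite Hf1 ltry.
have zint := zb_int dphi s2gt0 Hint1 Hmean Hvar.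
have tzint := tzb_int dphi s2gt0 Hint1 Hmean Hint3.
have zint1 := zb_int1 dphi s2gt0 Hint1 Hmean Hvar.
have tzint0 := tzb_int0 dphi s2gt0 Hint1 Hmean Hint3 Hm3.
pose c1 := (g xr - g xl) / (xr - xl).
pose c0 := g xl - c1 * xl.
have ellE x : ell g xl xr x = c0 + c1 * x by rewrite /ell /c0 /c1; ring.
have lin_int (u : R -> R) : mu.-integrable [set: R] (fun x => (u x)%:E) ->
    mu.-integrable [set: R] (fun x => (x * u x)%:E) ->
    mu.-integrable [set: R] (fun x => (ell g xl xr x * u x)%:E).
  move=> i0 i1.
  have := integrableD measurableT (integrableZl measurableT c0 i0) (integrableZl measurableT c1 i1).
  apply: eq_integrable => // x _; rewrite ellE -!EFinM -EFinD; congr EFin; ring.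
have lin_Rint (u : R -> R) : mu.-integrable [set: R] (fun x => (u x)%:E) ->
    mu.-integrable [set: R] (fun x => (x * u x)%:E) ->
    Rintegral mu setT (fun x => ell g xl xr x * u x) =
    c0 * Rintegral mu setT u + c1 * Rintegral mu setT (fun x => x * u x).
  move=> i0 i1.
  rewrite -(RintegralZl c0 measurableT i0) -(RintegralZl c1 measurableT i1) -RintegralD //; last 2 first.
  - have := integrableZl measurableT c0 i0; apply: eq_integrable => // x _; by rewrite -EFinM.
  - have := integrableZl measurableT c1 i1; apply: eq_integrable => // x _; by rewrite -EFinM.
  by apply: eq_Rintegral => x _; rewrite ellE; ring.
have iLF := lin_int (fX phi) fint Hint1.
have iLZ := lin_int (ZB phi s2) zint tzint.
have RLF : Rintegral mu setT (fun x => ell g xl xr x * fX phi x) = c0.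
  by rewrite lin_Rint // /Rintegral Hf1 Hmean /= mulr1 mulr0 addr0.
have RLZ : Rintegral mu setT (fun x => ell g xl xr x * ZB phi s2 x) = c0.
  by rewrite lin_Rint // /Rintegral zint1 tzint0 /= mulr1 mulr0 addr0.
have Dge0 x : 0 <= (g x - ell g xl xr x) * (fX phi x - ZB phi s2 x).
  have [h1|h1|->] := ltgtP x xl.
  - apply: mulr_ge0; rewrite subr_ge0; [exact: ell_left | exact: zL].
  - have [h2|h2|->] := ltgtP x xr.
    + apply: mulr_le0; rewrite subr_le0.
      * by apply: ell_mid => //; rewrite (ltW h1) (ltW h2).
      * by apply: Hmid; rewrite h1 h2.
    + apply: mulr_ge0; rewrite subr_ge0; [exact: ell_right | exact: zR].
    + by rewrite ell_xr // subrr mul0r.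
  - by rewrite ell_xl subrr mul0r.
have iA := integrableB measurableT iF iZ.
have iB := integrableB measurableT iLF iLZ.
have iD := integrableB measurableT iA iB.
have RD : 0 <= Rintegral mu setT (fun x => (g x * fX phi x - g x * ZB phi s2 x) -
                  (ell g xl xr x * fX phi x - ell g xl xr x * ZB phi s2 x)).
  apply: Rintegral_ge0 => x _.
  by rewrite (_ : _ - _ = (g x - ell g xl xr x) * (fX phi x - ZB phi s2 x)) //; ring.
rewrite (@RintegralB _ _ _ mu setT (fun x => g x * fX phi x - g x * ZB phi s2 x)
  (fun x => ell g xl xr x * fX phi x - ell g xl xr x * ZB phi s2 x) measurableT iA iB) in RD.
rewrite (@RintegralB _ _ _ mu setT (fun x => g x * fX phi x) (fun x => g x * ZB phi s2 x) measurableT iF iZ) in RD.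
rewrite (@RintegralB _ _ _ mu setT (fun x => ell g xl xr x * fX phi x)
  (fun x => ell g xl xr x * ZB phi s2 x) measurableT iLF iLZ) in RD.
rewrite RLF RLZ subrr subr0 subr_ge0 in RD.
rewrite -(fineK (integrable_fin_num measurableT iZ)) -(fineK (integrable_fin_num measurableT iF)).
by rewrite lee_fin; exact: RD.
Qed.
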